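(* Let $\mathcal{N}$ be a finite-dimensional 2-step nilpotent Lie algebra over $\mathbb{R}$. Let $\mathcal{Z}$ be either $[\mathcal{N},\mathcal{N}]$ or the center $\mathfrak{z}(\mathcal{N})$, and let $\mathcal{V}$ be a subspace with $\mathcal{N}=\mathcal{V}\oplus\mathcal{Z}$. Let $G$ be the group of Lie ring automorphisms of $\mathcal{N}$, $H=\{f\in G: f(x)-x\in\mathcal{Z}\text{ for all }x\in\mathcal{N}\}$ and $K=\{f\in G: f(\mathcal{V})=\mathcal{V}\}$. Then $H$ is a normal subgroup of $G$, $K$ is a subgroup of $G$, and $G=HK$. If $\mathcal{Z}=[\mathcal{N},\mathcal{N}]$, then moreover $H\cap K=\{\mathrm{id}\}$, so $G\cong H\rtimes K$.
   Context: A Lie ring automorphism of a real Lie algebra is a bijective additive map preserving the Lie bracket (not necessarily $\mathbb{R}$-linear). *)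

(* Defs.v *)
From HB Require Import structures.
From mathcomp Require Import all_boot all_order all_algebra.
From mathcomp Require Import reals.
Set Implicit Arguments. Unset Strict Implicit. Unset Printing Implicit Defensive.
Import Order.TTheory GRing.Theory Num.Theory.
Local Open Scope ring_scope.

Section LieDefs.
Variables (R : realType) (V : vectType R).

Definition is_lie_bracket (b : V -> V -> V) : Prop :=
  [/\ (forall (a : R) x y z, b (a *: x + y) z = a *: b x z + b y z),
      (forall (a : R) x y z, b x (a *: y + z) = a *: b x y + b x z),
      (forall x, b x x = 0) &
      (forall x y z, b x (b y z) + b y (b z x) + b z (b x y) = 0)].

Definition two_step_nilpotent (b : V -> V -> V) : Prop :=
  (forall x y z, b (b x y) z = 0) /\ (exists x y, b x y <> 0).

Definition is_derived_algebra (b : V -> V -> V) (Z : {vspace V}) : Prop :=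
  forall z, z \in Z <->
    exists n (xs ys : 'I_n -> V), z = \sum_(i < n) b (xs i) (ys i).

Definition is_center (b : V -> V -> V) (Z : {vspace V}) : Prop :=
  forall z, z \in Z <-> (forall x, b z x = 0).

(* Lie ring automorphism: bijective additive map preserving the bracket
   (not necessarily R-linear) *)
Definition lie_ring_aut (b : V -> V -> V) (f : V -> V) : Prop :=
  [/\ (forall x y, f (x + y) = f x + f y), bijective f &
      (forall x y, f (b x y) = b (f x) (f y))].

(* set-theoretic image equality f(U) = U, for a (merely additive) map f *)
Definition maps_onto_self (f : V -> V) (U : {vspace V}) : Prop :=
  (forall u, u \in U -> f u \in U) /\
  (forall w, w \in U -> exists2 u, u \in U & f u = w).

End LieDefs.

Definition subgroup_of (T : Type) (G P : (T -> T) -> Prop) : Prop :=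
  [/\ (forall f, P f -> G f), P id,
      (forall f g, P f -> P g -> P (f \o g)) &
      (forall f g, P f -> G g -> cancel f g -> P g)].

Definition normal_subgroup_of (T : Type) (G P : (T -> T) -> Prop) : Prop :=
  subgroup_of G P /\
  (forall f g h, G f -> G g -> cancel f g -> P h -> P (f \o h \o g)).

(* Main.v *)
Require Import Defs.
From HB Require Import structures.
From mathcomp Require Import all_boot all_order all_algebra.
From mathcomp Require Import reals.
Import GRing.Theory Num.Theory.
Local Open Scope ring_scope.

Section S.
Variables (R : realType) (N : vectType R) (b : N -> N -> N) (Vs Zs : {vspace N}).
Hypotheses (hb : is_lie_bracket b) (hn : two_step_nilpotent b)
  (hZ : is_derived_algebra b Zs \/ is_center b Zs)
  (hsum : (Vs + Zs)%VS = fullv) (hcap : (Vs :&: Zs)%VS = 0%VS).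

Lemma bDl x y z : b (x + y) z = b x z + b y z.
Proof. by have [h1 _ _ _] := hb; rewrite -[x]scale1r h1 !scale1r. Qed.
Lemma bDr x y z : b x (y + z) = b x y + b x z.
Proof. by have [_ h2 _ _] := hb; rewrite -[y]scale1r h2 !scale1r. Qed.
Lemma b0l y : b 0 y = 0.
Proof. have h : b 0 y + b 0 y = b 0 y + 0 by rewrite -bDl !addr0. exact: addrI h. Qed.
Lemma bAnti x y : b x y = - b y x.
Proof.
have [_ _ h3 _] := hb; apply/eqP; rewrite -subr_eq0 opprK.
by have := h3 (x + y); rewrite bDl !bDr !h3 add0r addr0 => ->.
Qed.

Lemma Zcentral z x : z \in Zs -> b z x = 0.
Proof.
case: hZ => [hd|hc]; last by move/hc.
move/hd=> [n [xs [ys ->]]].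
apply: (big_ind (fun w => b w x = 0)); first exact: b0l.
  by move=> u v hu hv; rewrite bDl hu hv addr0.
by move=> i _; case: hn => h _; apply: h.
Qed.
Lemma Zcentral' z x : z \in Zs -> b x z = 0.
Proof. by move=> hz; rewrite bAnti Zcentral ?oppr0. Qed.

Lemma bZl x z y : z \in Zs -> b (x + z) y = b x y.
Proof. by move=> hz; rewrite bDl (@Zcentral z y hz) addr0. Qed.
Lemma bZr x z y : z \in Zs -> b y (x + z) = b y x.
Proof. by move=> hz; rewrite bDr (@Zcentral' z y hz) addr0. Qed.

Arguments bZl {x z y}.
Arguments bZr {x z y}.
Lemma bZ x y : b x y \in Zs.
Proof.
case: hZ => [hd|hc].
  by apply/hd; exists 1%N, (fun _ => x), (fun _ => y); rewrite big_ord1.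
by apply/hc => w; case: hn => h _; apply: h.
Qed.

Local Notation pV := (daddv_pi Vs Zs).
Local Notation pZ := (daddv_pi Zs Vs).

Lemma pVZ x : pV x + pZ x = x.
Proof. by rewrite daddv_pi_add // hsum memvf. Qed.
Lemma pVin x : pV x \in Vs. Proof. exact: memv_pi. Qed.
Lemma pZin x : pZ x \in Zs. Proof. exact: memv_pi. Qed.
Lemma pV_V v : v \in Vs -> pV v = v.
Proof. by apply: daddv_pi_id. Qed.
Lemma pZ_Z z : z \in Zs -> pZ z = z.
Proof. by apply: daddv_pi_id; rewrite capvC. Qed.
Lemma pZ_V v : v \in Vs -> pZ v = 0.
Proof. move=> hv; have h := pVZ v; rewrite pV_V // in h; by apply: (addrI v); rewrite h addr0. Qed.
Lemma pV_Z z : z \in Zs -> pV z = 0.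
Proof. move=> hz; have h := pVZ z; rewrite pZ_Z // in h; by apply: (addIr z); rewrite h add0r. Qed.
Lemma pV_VZ v z : v \in Vs -> z \in Zs -> pV (v + z) = v.
Proof. by move=> hv hz; rewrite linearD /= pV_V // pV_Z // addr0. Qed.
Lemma pZ_VZ v z : v \in Vs -> z \in Zs -> pZ (v + z) = z.
Proof. by move=> hv hz; rewrite linearD /= pZ_V // pZ_Z // add0r. Qed.

Arguments pV_VZ {v z}.
Arguments pZ_VZ {v z}.
Arguments pV_Z {z}.
Arguments pZ_Z {z}.
Arguments pV_V {v}.
Arguments pZ_V {v}.
Lemma VZ0 u : u \in Vs -> u \in Zs -> u = 0.
Proof. by move=> h1 h2; apply/eqP; rewrite -memv0 -hcap memv_cap h1. Qed.

Section Aut.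
Variable f : N -> N.
Hypothesis hf : lie_ring_aut b f.
Lemma fD x y : f (x + y) = f x + f y. Proof. by case: hf. Qed.
Lemma f0 : f 0 = 0.
Proof. have h : f 0 + f 0 = f 0 + 0 by rewrite -fD !addr0. exact: addrI h. Qed.
Lemma fN x : f (- x) = - f x.
Proof. by apply: (addrI (f x)); rewrite -fD addrN f0 addrN. Qed.
Lemma fB x y : f (x - y) = f x - f y. Proof. by rewrite fD fN. Qed.
Lemma fb x y : f (b x y) = b (f x) (f y). Proof. by case: hf. Qed.
Lemma fsum n (F : 'I_n -> N) : f (\sum_(i < n) F i) = \sum_(i < n) f (F i).
Proof. exact: (big_morph f fD f0). Qed.
End Aut.
Arguments fD {f} hf x y.
Arguments f0 {f} hf.
Arguments fN {f} hf x.
Arguments fB {f} hf x y.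
Arguments fb {f} hf x y.
Arguments fsum {f} hf n F.

Lemma aut_inv f g : lie_ring_aut b f -> cancel f g -> lie_ring_aut b g /\ cancel g f.
Proof.
move=> hf fK; case: (hf) => _ [g' fK' Kf'] _.
have gf : cancel g f by move=> x; rewrite -[x]Kf' fK.
have ginj : injective f := can_inj fK.
split=> //; split.
- by move=> x y; apply: ginj; rewrite (fD hf) !gf.
- by exists f.
- by move=> x y; apply: ginj; rewrite (fb hf) !gf.
Qed.

Lemma aut_comp f g : lie_ring_aut b f -> lie_ring_aut b g -> lie_ring_aut b (f \o g).
Proof.
move=> hf hg; split.
- by move=> x y /=; rewrite (fD hg) (fD hf).
- by case: hf => _ bf _; case: hg => _ bg _; apply: bij_comp.
- by move=> x y /=; rewrite (fb hg) (fb hf).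
Qed.

Lemma fZ f z : lie_ring_aut b f -> z \in Zs -> f z \in Zs.
Proof.
move=> hf; case: (hf) => _ [g fK gf] _.
case: hZ => [hd|hc].
  move/hd=> [n [xs [ys ->]]]; rewrite fsum //; apply/hd.
  by exists n, (f \o xs), (f \o ys); apply: eq_bigr => i _; rewrite fb.
move/hc=> h; apply/hc => x; by rewrite -[x]gf -fb // h f0.
Qed.

Arguments fZ {f z}.

Definition kmap f x := pV (f (pV x)) + f (pZ x).

Lemma kmapK f g : lie_ring_aut b f -> lie_ring_aut b g -> cancel g f ->
  cancel (kmap g) (kmap f).
Proof.
move=> hf hg gf x; rewrite /kmap.
have hgz : g (pZ x) \in Zs := fZ hg (pZin x).
rewrite (pV_VZ (pVin _) hgz) (pZ_VZ (pVin _) hgz) gf.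
have e : f (pV (g (pV x))) = pV x - f (pZ (g (pV x))).
  have h := congr1 f (pVZ (g (pV x))); rewrite (fD hf) gf in h; by rewrite -[LHS](addrK (f (pZ (g (pV x))))) h.
have hz2 : - f (pZ (g (pV x))) \in Zs by rewrite memvN; exact: fZ hf (pZin _).
by rewrite e (pV_VZ (pVin _) hz2) pVZ.
Qed.

Lemma kmap_aut f g : lie_ring_aut b f -> lie_ring_aut b g -> cancel g f -> cancel f g ->
  lie_ring_aut b (kmap f).
Proof.
move=> hf hg gf fg; split.
- move=> x y; rewrite /kmap !linearD /= (fD hf) linearD /= (fD hf).
  by rewrite addrACA.
- by exists (kmap g); apply: kmapK.
- move=> x y; rewrite /kmap (pV_Z (bZ x y)) (f0 hf) linear0 add0r (pZ_Z (bZ x y)).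
  have hz1 := fZ hf (pZin x); have hz2 := fZ hf (pZin y).
  rewrite (bZl hz1) (bZr hz2).
  have e u : pV (f (pV u)) = f (pV u) + - pZ (f (pV u)).
    by rewrite -{2}(pVZ (f (pV u))) addrK.
  have hz3 u : - pZ (f (pV u)) \in Zs by rewrite memvN pZin.
  rewrite !e (bZl (hz3 x)) (bZr (hz3 y)) -(fb hf).
  by rewrite -{1}(pVZ x) -{1}(pVZ y) (bZl (pZin x)) (bZr (pZin y)).
Qed.

Arguments aut_inv {f g}.
Arguments aut_comp {f g}.
Arguments kmapK {f g}.
Arguments kmap_aut {f g}.
Arguments fZ {f z}.
Lemma main :
  let G := fun f : N -> N => lie_ring_aut b f in
  let H := fun f : N -> N => G f /\ (forall x, f x - x \in Zs) in
  let K := fun f : N -> N => G f /\ maps_onto_self f Vs in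
  [/\ normal_subgroup_of G H,
      subgroup_of G K,
      (forall f, G f -> exists h k, [/\ H h, K k & f =1 h \o k]) &
      (is_derived_algebra b Zs -> forall f, H f -> K f -> f =1 id)].
Proof.
move=> G H K.
have Gid : G id by split=> //; exists id.
split.
- split.
    split.
    + by move=> f [].
    + by split=> // x; rewrite subrr mem0v.
    + move=> f g [Gf Hf] [Gg Hg]; split; first exact: aut_comp.
      move=> x /=.
      have -> : f (g x) - x = (f (g x) - g x) + (g x - x) by rewrite addrA subrK.
      by rewrite memvD.
    + move=> f g [Gf Hf] Gg fg; split=> // x.
      have [_ gf] := aut_inv Gf fg.
      have -> : g x - x = - (f (g x) - g x) by rewrite gf opprB.
      by rewrite memvN.
  move=> f g h Gf Gg fg [Gh Hh]; split; first exact: aut_comp (aut_comp Gf Gh) Gg.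
  move=> x /=; have [_ gf] := aut_inv Gf fg.
  rewrite -{2}(gf x) -(fB Gf); exact: fZ Gf (Hh _).
- split.
  + by move=> f [].
  + by split=> //; split=> u hu //; exists u.
  + move=> f g [Gf [f1 f2]] [Gg [g1 g2]]; split; first exact: aut_comp.
    split=> [u hu|w hw]; first by apply: f1; apply: g1.
    have [u hu e] := f2 w hw; have [u' hu' e'] := g2 u hu.
    by exists u' => //=; rewrite e' e.
  + move=> f g [Gf [f1 f2]] Gg fg; split=> //.
    split=> [u hu|w hw].
      by have [v hv <-] := f2 u hu; rewrite fg.
    by exists (f w); [exact: f1 | exact: fg].
- move=> f Gf.
  have [g fg gf] : bijective f by case: Gf.
  have Gg := (aut_inv Gf fg).1.
  exists (f \o kmap g), (kmap f); split.
  + split; first exact: aut_comp Gf (kmap_aut Gg Gf fg gf).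
    move=> x /=; set y := kmap g x.
    have -> : x = kmap f y by rewrite /y (kmapK Gf Gg gf).
    rewrite /kmap -{1}(pVZ y) (fD Gf) opprD addrACA subrr addr0.
    rewrite -[X in X - _](pVZ (f (pV y))) addrAC subrr add0r; exact: pZin.
  + split; first exact: kmap_aut Gf Gg gf fg.
    split=> [u hu|w hw].
      rewrite /kmap (pZ_V hu) (f0 Gf) addr0; exact: pVin.
    exists (kmap g w); last exact: (kmapK Gf Gg gf).
    rewrite /kmap (pZ_V hw) (f0 Gg) addr0; exact: pVin.
  + by move=> x /=; rewrite (kmapK Gg Gf fg).
- move=> hd f [Gf Hf] [_ [f1 _]] x.
  have fV v : v \in Vs -> f v = v.
    move=> hv; apply/eqP; rewrite -subr_eq0; apply/eqP; apply: VZ0; last exact: Hf.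
    by rewrite memvB ?f1.
  have fZ' z : z \in Zs -> f z = z.
    move/hd=> [n [xs [ys ->]]]; rewrite (fsum Gf); apply: eq_bigr => i _.
    have e u : f u = u + (f u - u) by rewrite addrC subrK.
    by rewrite (fb Gf) (e (xs i)) (e (ys i)) (bZl (Hf _)) (bZr (Hf _)).
  by rewrite /= -(pVZ x) (fD Gf) fV ?pVin // fZ' ?pZin.
Qed.

End S.

Theorem proposition7p1 (R : realType) (N : vectType R) (b : N -> N -> N)
    (Vs Zs : {vspace N}) :
  is_lie_bracket b -> two_step_nilpotent b ->
  (is_derived_algebra b Zs \/ is_center b Zs) ->
  (Vs + Zs)%VS = fullv -> (Vs :&: Zs)%VS = 0%VS ->
  let G := fun f : N -> N => lie_ring_aut b f in
  let H := fun f : N -> N => G f /\ (forall x, f x - x \in Zs) in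
  let K := fun f : N -> N => G f /\ maps_onto_self f Vs in
  [/\ normal_subgroup_of G H,
      subgroup_of G K,
      (forall f, G f -> exists h k, [/\ H h, K k & f =1 h \o k]) &
      (is_derived_algebra b Zs -> forall f, H f -> K f -> f =1 id)].
Proof. exact: main. Qed.
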